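(* Let $x$ be a random vector in $\mathbb{R}^n$ (the data), let $e: \mathbb{R}^n \to \mathbb{R}^m$ be a measurable map (encoder) and $g: \mathbb{R}^m \to \mathbb{R}^n$ a $K$-Lipschitz map with respect to the Euclidean norms (decoder). Let $z = e(x)$, assume $z$ has finite second moments and $\mathbb{E}\|x - g(z)\|_2 < \infty$, and let $\bar z_i = \mathbb{E}[z_i]$ and $\sigma_i$ be the standard deviation of $z_i$. Let $P \subseteq \{1,\dots,m\}$ and define the pruned code $\tilde z_P$ by $[\tilde z_P]_i = z_i$ for $i \notin P$ and $[\tilde z_P]_i = \bar z_i$ for $i \in P$. Let $\epsilon = \mathbb{E}\|x - g(z)\|_2$ and $\tilde\epsilon = \mathbb{E}\|x - g(\tilde z_P)\|_2$. Then $$\tilde\epsilon - \epsilon \le K\sqrt{\sum_{i\in P} \sigma_i^2}.$$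
   Context: $\epsilon$ is the $L_2$ reconstruction error of the autoencoder, and $\tilde\epsilon$ the $L_2$ reconstruction error after pruning (fixing at their means) the latent dimensions indexed by $P$. *)

(* Defs.v *)
From HB Require Import structures.
From mathcomp Require Import all_boot all_order all_algebra.
From mathcomp Require Import all_classical all_reals all_analysis.
Set Implicit Arguments. Unset Strict Implicit. Unset Printing Implicit Defensive.
Import Order.TTheory GRing.Theory Num.Theory.
Local Open Scope ring_scope.

(* R^n is represented by n.-tuple R, which mathcomp-analysis equips with the
   product sigma-algebra (generated by the coordinate projections). *)

Section Defs.
Variable R : realType.

Definition enorm n (v : n.-tuple R) : R :=
  Num.sqrt (\sum_(i < n) tnth v i ^+ 2).

Definition tsub n (u v : n.-tuple R) : n.-tuple R :=
  [tuple tnth u i - tnth v i | i < n].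

Definition lipschitz_eucl m n (K : R) (f : m.-tuple R -> n.-tuple R) : Prop :=
  forall u v, enorm (tsub (f u) (f v)) <= K * enorm (tsub u v).

Definition prune m (P : {set 'I_m}) (zbar z : m.-tuple R) : m.-tuple R :=
  [tuple if i \in P then tnth zbar i else tnth z i | i < m].
End Defs.

(* Main.v *)
Require Import Defs.
From HB Require Import structures.
From mathcomp Require Import all_boot all_order all_algebra.
From mathcomp Require Import all_classical all_reals all_analysis.
From mathcomp Require Import ring lra.
Import Order.TTheory GRing.Theory Num.Theory.
Local Open Scope ring_scope.

Section Helpers.
Variable R : realType.

Lemma lagrange n (a b : 'I_n -> R) :
  (\sum_i a i * b i) ^+ 2 <= (\sum_i a i ^+ 2) * (\sum_i b i ^+ 2).
Proof.
have H : 0 <= \sum_i \sum_j (a i * b j - a j * b i) ^+ 2.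
  by apply: sumr_ge0 => i _; apply: sumr_ge0 => j _; exact: sqr_ge0.
set A := \sum_i a i ^+ 2. set B := \sum_i b i ^+ 2. set C := \sum_i a i * b i.
have E : \sum_i \sum_j (a i * b j - a j * b i) ^+ 2 = A * B + B * A - 2 * (C * C).
  rewrite /A /B /C !big_distrlr /= mulr_sumr -big_split -sumrB; apply: eq_bigr => i _.
  rewrite mulr_sumr -big_split -sumrB; apply: eq_bigr => j _ /=; ring.
have : 0 <= A * B + B * A - 2 * (C * C) by rewrite -E.
rewrite expr2 (mulrC B A); lra.
Qed.

Lemma minkowski n (a b : 'I_n -> R) :
  Num.sqrt (\sum_i (a i + b i) ^+ 2) <=
  Num.sqrt (\sum_i a i ^+ 2) + Num.sqrt (\sum_i b i ^+ 2).
Proof.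
set A := \sum_i a i ^+ 2. set B := \sum_i b i ^+ 2. set C := \sum_i a i * b i.
have A0 : 0 <= A by apply: sumr_ge0 => i _; exact: sqr_ge0.
have B0 : 0 <= B by apply: sumr_ge0 => i _; exact: sqr_ge0.
have E : \sum_i (a i + b i) ^+ 2 = A + B + 2 * C.
  rewrite /A /B /C mulr_sumr -!big_split; apply: eq_bigr => i _ /=; ring.
have HC : C <= Num.sqrt A * Num.sqrt B.
  rewrite -sqrtrM // (le_trans (ler_norm C)) // -sqrtr_sqr ler_sqrt ?mulr_ge0 //.
  exact: lagrange.
apply: (le_trans (y := Num.sqrt ((Num.sqrt A + Num.sqrt B) ^+ 2))); last first.
  by rewrite sqrtr_sqr ger0_norm // addr_ge0 // sqrtr_ge0.
rewrite E ler_sqrt ?sqr_ge0 // sqrrD !sqr_sqrtr //.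
rewrite -mulr_natr; lra.
Qed.

Lemma enorm_ge0 n (u : n.-tuple R) : 0 <= enorm u.
Proof. exact: sqrtr_ge0. Qed.

Lemma enorm_tri n (u v w : n.-tuple R) :
  enorm (tsub u w) <= enorm (tsub u v) + enorm (tsub v w).
Proof.
rewrite /enorm.
have := @minkowski n (fun i => tnth u i - tnth v i) (fun i => tnth v i - tnth w i).
congr (_ <= _ + _); last 2 first.
- by congr Num.sqrt; apply: eq_bigr => i _; rewrite tnth_mktuple.
- by congr Num.sqrt; apply: eq_bigr => i _; rewrite tnth_mktuple.
by congr Num.sqrt; apply: eq_bigr => i _; rewrite tnth_mktuple; congr (_ ^+ 2); ring.
Qed.

Local Open Scope ereal_scope.
Lemma le_integral_nonneg d (T : measurableType d) (mu : {measure set T -> \bar R})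
  (f g : T -> \bar R) : (forall x, 0 <= f x) -> (forall x, f x <= g x) ->
  \int[mu]_x f x <= \int[mu]_x g x.
Proof.
move=> f0 fg.
have g0 : forall x, 0 <= g x by move=> x; exact: le_trans (f0 x) (fg x).
rewrite !ge0_integralTE //; apply: le_ereal_sup => _ [h hf <-]; exists h => //.
by move=> x; exact: le_trans (hf x) (fg x).
Qed.

Lemma expectation_bigsum d (T : measurableType d) (Pr : probability T R)
  (I : finType) (A : {set I}) (F : I -> T -> R) :
  (forall i, F i \in Lfun Pr 1) ->
  (\sum_(i in A) F i)%R \in Lfun Pr 1 /\
  'E_Pr[\sum_(i in A) F i] = \sum_(i in A) 'E_Pr[F i].
Proof.
move=> HF.
apply: (big_rec2 (fun y1 y2 => y1 \in Lfun Pr 1 /\ 'E_Pr[y1] = y2)).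
  split; first exact: rpred0.
  exact: (expectation_cst Pr 0).
move=> i y1 y2 _ [H1 H2]; split; first exact: rpredD.
by rewrite -H2 -expectationD.
Qed.
End Helpers.

Local Open Scope ereal_scope.

Theorem theorem3 (R : realType) (d : measure_display) (Omega : measurableType d)
  (Pr : probability Omega R) (n m : nat)
  (x : Omega -> n.-tuple R) (e : n.-tuple R -> m.-tuple R)
  (g : m.-tuple R -> n.-tuple R) (K : R) (P : {set 'I_m}) :
  measurable_fun setT x ->
  measurable_fun setT e ->
  lipschitz_eucl K g ->
  (forall i : 'I_m, (fun w => tnth (e (x w)) i) \in Lfun Pr 2%:E) ->
  Pr.-integrable setT (fun w => (enorm (tsub (x w) (g (e (x w)))))%:E) ->
  let z := fun w => e (x w) in
  let zbar : m.-tuple R := [tuple fine 'E_Pr[fun w => tnth (z w) i] | i < m] in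
  let sigma := fun i : 'I_m => Num.sqrt (fine 'V_Pr[fun w => tnth (z w) i]) in
  let eps := \int[Pr]_w (enorm (tsub (x w) (g (z w))))%:E in
  let eps_t := \int[Pr]_w (enorm (tsub (x w) (g (prune P zbar (z w)))))%:E in
  eps_t - eps <= (K * Num.sqrt (\sum_(i in P) sigma i ^+ 2))%:E.
Proof.
move=> _ _ Lg Lz Ih.
pose z := fun w => e (x w).
pose zbar : m.-tuple R := [tuple fine 'E_Pr[fun w => tnth (z w) i] | i < m].
pose sigma := fun i : 'I_m => Num.sqrt (fine 'V_Pr[fun w => tnth (z w) i]).
pose eps := \int[Pr]_w (enorm (tsub (x w) (g (z w))))%:E.
pose eps_t := \int[Pr]_w (enorm (tsub (x w) (g (prune P zbar (z w)))))%:E.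
change (eps_t - eps <= (K * Num.sqrt (\sum_(i in P) sigma i ^+ 2))%:E).
pose Y i : Omega -> R := ((fun w => tnth (z w) i) \- cst (tnth zbar i))%R.
pose S : Omega -> R := (\sum_(i in P) (Y i * Y i))%R.
have SE w : S w = (\sum_(i in P) (Y i w) ^+ 2)%R.
  by rewrite /S fct_sumE /=; apply: eq_bigr => i _; rewrite expr2.
have S0 w : (0 <= S w)%R by rewrite SE; apply: sumr_ge0 => i _; exact: sqr_ge0.
pose Dn : Omega -> R := fun w => Num.sqrt (S w).
pose h : Omega -> R := fun w => enorm (tsub (x w) (g (z w))).
have DnE w : enorm (tsub (z w) (prune P zbar (z w))) = Dn w.
  rewrite /enorm /Dn SE; congr Num.sqrt; rewrite [RHS]big_mkcond; apply: eq_bigr => i _.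
  rewrite /tsub /prune !tnth_mktuple /Y /=; case: ifP => _ //.
    by rewrite /zbar tnth_mktuple.
  by rewrite subrr expr0n.
have pw w : (enorm (tsub (x w) (g (prune P zbar (z w)))) <= h w + K * Dn w)%R.
  apply: (le_trans (@enorm_tri R _ _ (g (z w)) _)).
  by rewrite lerD2l -DnE; exact: Lg.
have LY i : Y i \in Lfun Pr 2%:E.
  apply: rpredB; first by rewrite lee_fin ler1n.
  - by move=> ?; exact: Lz.
  - by move=> ?; exact: Lfun_cst.
have LYY i : (Y i * Y i)%R \in Lfun Pr 1 by exact: Lfun2_mul_Lfun1.
have [LS ES] := @expectation_bigsum R _ _ Pr _ P _ LYY.
have VY i : 'V_Pr[fun w => tnth (z w) i] = 'E_Pr[Y i * Y i].
  by rewrite /variance unlock /Y tnth_mktuple.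
pose Vs := (\sum_(i in P) sigma i ^+ 2)%R.
have Vs0 : (0 <= Vs)%R by apply: sumr_ge0 => i _; exact: sqr_ge0.
have ESV : 'E_Pr[S] = Vs%:E.
  rewrite ES /Vs -sumEFin; apply: eq_bigr => i _.
  rewrite /sigma sqr_sqrtr; last by apply: fine_ge0; exact: variance_ge0.
  by rewrite VY fineK //; exact: expectation_fin_num.
have mS : measurable_fun setT S.
  by have := sub_Lfun_mfun LS; rewrite inE.
have mDn : measurable_fun setT Dn.
  exact: measurableT_comp (measurable_realfun.continuous_measurable_fun (@sqrt_continuous R)) mS.
have L1S : (cst 1 + S)%R \in Lfun Pr 1 by apply: rpredD => //; exact: Lfun_cst.
have DnS w : (Dn w ^+ 2 = S w)%R by rewrite sqr_sqrtr.
have Dn0 w : (0 <= Dn w)%R by exact: sqrtr_ge0.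
have LD : Dn \in Lfun Pr 1.
  apply/Lfun1_integrable.
  apply: (@le_integrable d Omega R Pr setT measurableT (EFin \o Dn) (EFin \o (cst 1 + S)%R)).
  - exact/measurable_realfun.measurable_EFinP.
  - move=> w _ /=; have -> : (cst 1 + S)%R w = (1 + S w)%R by [].
    rewrite lee_fin !ger0_norm ?addr_ge0 //; have := DnS w; have := Dn0 w; nra.
  - exact/Lfun1_integrable.
pose Ed := fine 'E_Pr[Dn].
have EDn : 'E_Pr[Dn] = Ed%:E by rewrite fineK //; exact: expectation_fin_num.
have Ed0 : (0 <= Ed)%R by apply: fine_ge0; apply: expectation_ge0.
have Ih' : Pr.-integrable setT (EFin \o h) by exact: Ih.
have LKD : (K \o* Dn)%R \in Lfun Pr 1 by apply: Lfun_scale => //.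
have C7 : eps_t <= \int[Pr]_w ((EFin \o h) w + (EFin \o (K \o* Dn)%R) w).
  apply: le_integral_nonneg => w; first by rewrite lee_fin; exact: enorm_ge0.
  by rewrite /= -EFinD lee_fin mulrC; exact: pw.
have C6 : \int[Pr]_w ((EFin \o h) w + (EFin \o (K \o* Dn)%R) w) = eps + (K * Ed)%:E.
  rewrite integralD_EFin //; last exact/Lfun1_integrable.
  congr (_ + _).
  transitivity 'E_Pr[(K \o* Dn)%R]; first by rewrite unlock.
  by rewrite expectationZl // EDn -EFinM.
have C8 : (2 * Ed * Ed <= Vs + Ed ^+ 2)%R.
  have : 'E_Pr[((2 * Ed)%R \o* Dn)%R] <= 'E_Pr[(S + cst (Ed ^+ 2)%R)%R].
    rewrite unlock; apply: le_integral => //.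
    - by apply/Lfun1_integrable; apply: Lfun_scale.
    - by apply/Lfun1_integrable; apply: rpredD => //; exact: Lfun_cst.
    - move=> w _ /=; rewrite lee_fin; have -> : (S + cst (Ed ^+ 2))%R w = (S w + Ed ^+ 2)%R by [].
      have := DnS w; have := sqr_ge0 (Dn w - Ed); rewrite sqrrB; nra.
  rewrite expectationZl // expectationD //; last exact: Lfun_cst.
  by rewrite EDn ESV expectation_cst -EFinM -EFinD lee_fin.
have EdV : (Ed <= Num.sqrt Vs)%R.
  rewrite -(ger0_norm Ed0) -sqrtr_sqr ler_sqrt //; nra.
have epsf : eps \is a fin_num by exact: integrable_fin_num.
rewrite leeBlDr //; apply: (le_trans C7); rewrite C6 addeC -(fineK epsf) -!EFinD lee_fin lerD2r.
have [K0|K0] := leP 0%R K; first exact: ler_wpM2l.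
have D0 w : Dn w = 0%R.
  have := Lg (z w) (prune P zbar (z w)); rewrite DnE => H.
  have := @enorm_ge0 R _ (tsub (g (z w)) (g (prune P zbar (z w)))); have := Dn0 w; nra.
have S0' : S = cst 0%R by apply/funext => w; rewrite -DnS D0 expr0n.
have V0 : Vs = 0%R by move: ESV; rewrite S0' expectation_cst => -[].
move: EdV; rewrite V0 sqrtr0 => Ed00.
have -> : Ed = 0%R by apply/eqP; rewrite eq_le Ed00 Ed0.
have -> : (\sum_(i in P) sigma i ^+ 2)%R = Vs by [].
by rewrite V0 sqrtr0.
Qed.
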